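(* Under Assumption 1, for the GARCH-2F variance process, with $\varphi=\mathbb{E}\big[\|\boldsymbol{B}+\boldsymbol{b}(\boldsymbol{W}_t)\|\big]$ and $c=\|\boldsymbol{\omega}\|+\mathbb{E}\big[\|\boldsymbol{\alpha}\boldsymbol{f}(\boldsymbol{W}_t)\|\big]<\infty$, one has for every $\boldsymbol{x}\in\mathcal{D}$ $$\mathbb{E}\big[\|\boldsymbol{v}_t\|\ \big|\ \boldsymbol{v}_{t-1}=\boldsymbol{x}\big]\le\varphi\|\boldsymbol{x}\|+c.$$
   Context: Model (GARCH-2F): $Z_{1,t},Z_{2,t}$ i.i.d. $N(0,1)$ in $t$, mutually independent; $\boldsymbol{W}_t=(W_{1,t},W_{2,t})^T=(Z_{1,t-1},Z_{2,t-1})^T$ (independent of $\boldsymbol{v}_{t-1}$); $\boldsymbol{v}_t=\boldsymbol{\omega}+\boldsymbol{\beta}\boldsymbol{v}_{t-1}+\boldsymbol{\alpha}\big[(W_{1,t}-\gamma_1\sqrt{v_{1,t-1}})^2,(W_{2,t}-\gamma_2\sqrt{v_{2,t-1}})^2\big]^T$ with parameters as in Assumption 1 ($\omega_i>0$, $\beta_{ij}\ge0$, $\alpha_{ij}\ge0$, $\alpha_{11}+\alpha_{12}>0$, $\alpha_{21}+\alpha_{22}>0$, $\beta_{11}+\beta_{12}>0$, $\beta_{21}+\beta_{22}>0$), $\gamma_1,\gamma_2\in\mathbb{R}$. State space $\mathcal{D}=[\omega_1,\infty)\times[\omega_2,\infty)$. $\boldsymbol{B}$ has entries $B_{ij}=\beta_{ij}+\alpha_{ij}\gamma_j^2$.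 $\boldsymbol{f}(\boldsymbol{W}_t)=\big((|\gamma_1|+\sqrt{\gamma_1^2+W_{1,t}^2})^2,(|\gamma_2|+\sqrt{\gamma_2^2+W_{2,t}^2})^2\big)^T$ and $\boldsymbol{b}(\boldsymbol{W}_t)$ is the $2\times2$ matrix with entries $b_{ij}=\alpha_{ij}W_{j,t}^2\mathbf{1}_{(\gamma_jW_{j,t}<0)}$. $\|\cdot\|$ is the Euclidean vector norm and the induced ($L_2$ operator) matrix norm. *)

(* Defs.v *)
From HB Require Import structures.
From mathcomp Require Import all_boot all_order all_algebra.
From mathcomp Require Import all_classical all_reals all_analysis.
Set Implicit Arguments. Unset Strict Implicit. Unset Printing Implicit Defensive.
Import Order.TTheory GRing.Theory Num.Theory.
Local Open Scope ring_scope.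
Local Open Scope classical_set_scope.

Definition vnorm {R : realType} {n : nat} (v : 'cV[R]_n) : R :=
  Num.sqrt (\sum_(i < n) v i 0 ^+ 2).

Definition opnorm {R : realType} {n : nat} (M : 'M[R]_n) : R :=
  sup [set vnorm (M *m x) | x in [set x : 'cV[R]_n | vnorm x = 1]].

Definition cv2 {R : realType} (a b : R) : 'cV[R]_2 :=
  \col_(i < 2) (if i == 0 :> nat then a else b).

(* Standard bivariate Gaussian law of W_t = (W_1, W_2): product of two
   independent N(0,1). *)
Definition stdnormal2 {R : realType} := (normal_prob (0:R) 1 \x normal_prob (0:R) 1)%E.

Definition assumption1 {R : realType} (omega : 'cV[R]_2) (alpha beta : 'M[R]_2) : Prop :=
  [/\ forall i, 0 < omega i 0,
      forall i j, 0 <= beta i j,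
      forall i j, 0 <= alpha i j,
      forall i, 0 < \sum_(j < 2) alpha i j
    & forall i, 0 < \sum_(j < 2) beta i j].

Definition in_D {R : realType} (omega x : 'cV[R]_2) : Prop :=
  forall i, omega i 0 <= x i 0.

(* One step of the GARCH-2F recursion: v_t given v_{t-1} = x and W_t = w. *)
Definition garch_step {R : realType} (omega : 'cV[R]_2) (alpha beta : 'M[R]_2)
  (g1 g2 : R) (x : 'cV[R]_2) (w : R * R) : 'cV[R]_2 :=
  omega + beta *m x
  + alpha *m cv2 ((w.1 - g1 * Num.sqrt (x 0 0)) ^+ 2)
                 ((w.2 - g2 * Num.sqrt (x 1 0)) ^+ 2).

(* Conditional expectation E[ ||v_t|| | v_{t-1} = x ]: since W_t is independent
   of v_{t-1}, it is the integral of ||step(x, w)|| against the law of W_t. *)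
Definition cond_exp_norm {R : realType} (omega : 'cV[R]_2) (alpha beta : 'M[R]_2)
  (g1 g2 : R) (x : 'cV[R]_2) : \bar R :=
  (\int[stdnormal2]_w (vnorm (garch_step omega alpha beta g1 g2 x w))%:E)%E.

Definition Bmat {R : realType} (alpha beta : 'M[R]_2) (g1 g2 : R) : 'M[R]_2 :=
  \matrix_(i < 2, j < 2) (beta i j + alpha i j * (if j == 0 :> nat then g1 else g2) ^+ 2).

Definition bmat {R : realType} (alpha : 'M[R]_2) (g1 g2 : R) (w : R * R) : 'M[R]_2 :=
  \matrix_(i < 2, j < 2)
    (let wj := if j == 0 :> nat then w.1 else w.2 in
     let gj := if j == 0 :> nat then g1 else g2 in
     alpha i j * wj ^+ 2 * (if gj * wj < 0 then 1 else 0)).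

Definition fvec {R : realType} (g1 g2 : R) (w : R * R) : 'cV[R]_2 :=
  cv2 ((`|g1| + Num.sqrt (g1 ^+ 2 + w.1 ^+ 2)) ^+ 2)
      ((`|g2| + Num.sqrt (g2 ^+ 2 + w.2 ^+ 2)) ^+ 2).

Definition phi_const {R : realType} (alpha beta : 'M[R]_2) (g1 g2 : R) : \bar R :=
  (\int[stdnormal2]_w (opnorm (Bmat alpha beta g1 g2 + bmat alpha g1 g2 w))%:E)%E.

Definition c_const {R : realType} (omega : 'cV[R]_2) (alpha : 'M[R]_2) (g1 g2 : R) : \bar R :=
  ((vnorm omega)%:E + \int[stdnormal2]_w (vnorm (alpha *m fvec g1 g2 w))%:E)%E.

(* Main.v *)
Require Import Defs.
From HB Require Import structures.
From mathcomp Require Import all_boot all_order all_algebra.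
From mathcomp Require Import all_classical all_reals all_analysis.
From mathcomp Require Import ring lra.
Import Order.TTheory GRing.Theory Num.Theory.
Local Open Scope ring_scope.

Section Aux.
Variable R : realType.

Lemma vnormE (v : 'cV[R]_2) : vnorm v = Num.sqrt (v 0 0 ^+ 2 + v 1 0 ^+ 2).
Proof.
rewrite /vnorm !big_ord_recl big_ord0 addr0.
by congr (Num.sqrt (v _ 0 ^+ 2 + v _ 0 ^+ 2)); apply: val_inj.
Qed.

Lemma mulmx2E (A : 'M[R]_2) (v : 'cV[R]_2) i :
  (A *m v) i 0 = A i 0 * v 0 0 + A i 1 * v 1 0.
Proof.
rewrite mxE !big_ord_recl big_ord0 addr0.
by congr (A i _ * v _ 0 + A i _ * v _ 0); apply: val_inj.
Qed.

Lemma cv2E0 (a b : R) : cv2 a b 0 0 = a.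
Proof. by rewrite /cv2 mxE. Qed.
Lemma cv2E1 (a b : R) : cv2 a b 1 0 = b.
Proof. by rewrite /cv2 mxE. Qed.

Lemma sqrt_le_of (a b : R) : 0 <= b -> a <= b ^+ 2 -> Num.sqrt a <= b.
Proof.
move=> b0 ab; rewrite -(ger0_norm b0) -sqrtr_sqr ler_sqrt //.
exact: sqr_ge0.
Qed.

Lemma sqrt2_mono (a0 a1 b0 b1 : R) : 0 <= a0 <= b0 -> 0 <= a1 <= b1 ->
  Num.sqrt (a0 ^+ 2 + a1 ^+ 2) <= Num.sqrt (b0 ^+ 2 + b1 ^+ 2).
Proof.
move=> /andP[h0 h0'] /andP[h1 h1']; rewrite ler_sqrt; last first.
  by rewrite addr_ge0 // sqr_ge0.
have hb0 : 0 <= b0 := le_trans h0 h0'.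
have hb1 : 0 <= b1 := le_trans h1 h1'.
by apply: lerD; rewrite ler_sqr ?nnegrE.
Qed.

Lemma sqrt2_tri (p q r s : R) :
  Num.sqrt ((p + r) ^+ 2 + (q + s) ^+ 2) <=
  Num.sqrt (p ^+ 2 + q ^+ 2) + Num.sqrt (r ^+ 2 + s ^+ 2).
Proof.
set A := Num.sqrt (p ^+ 2 + q ^+ 2); set B := Num.sqrt (r ^+ 2 + s ^+ 2).
have A0 : 0 <= A by exact: sqrtr_ge0.
have B0 : 0 <= B by exact: sqrtr_ge0.
have A2 : A ^+ 2 = p ^+ 2 + q ^+ 2 by rewrite sqr_sqrtr // addr_ge0 // sqr_ge0.
have B2 : B ^+ 2 = r ^+ 2 + s ^+ 2 by rewrite sqr_sqrtr // addr_ge0 // sqr_ge0.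
apply: sqrt_le_of; first exact: addr_ge0.
have AB0 : 0 <= A * B by exact: mulr_ge0.
have AB2 : (A * B) ^+ 2 = (p ^+ 2 + q ^+ 2) * (r ^+ 2 + s ^+ 2) by rewrite exprMn A2 B2.
have key : p * r + q * s <= A * B.
  have h2 : (p * r + q * s) ^+ 2 <= (A * B) ^+ 2.
    rewrite AB2 -subr_ge0.
    have -> : (p ^+ 2 + q ^+ 2) * (r ^+ 2 + s ^+ 2) - (p * r + q * s) ^+ 2
       = (p * s - q * r) ^+ 2 by ring.
    exact: sqr_ge0.
  have [hn|hp] := leP 0 (p * r + q * s).
    by rewrite -ler_sqr ?nnegrE.
  exact: le_trans (ltW hp) AB0.
have -> : (A + B) ^+ 2 = A ^+ 2 + B ^+ 2 + 2 * (A * B) by ring.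
rewrite A2 B2.
have -> : (p + r) ^+ 2 + (q + s) ^+ 2 = p ^+ 2 + q ^+ 2 + (r ^+ 2 + s ^+ 2) + 2 * (p * r + q * s) by ring.
by rewrite lerD2l ler_pM2l.
Qed.

Lemma sqrt2_le_abs (a b : R) : Num.sqrt (a ^+ 2 + b ^+ 2) <= `|a| + `|b|.
Proof.
apply: sqrt_le_of; first by rewrite addr_ge0.
have ea : a ^+ 2 = `|a| ^+ 2 by rewrite real_normK ?num_real.
have eb : b ^+ 2 = `|b| ^+ 2 by rewrite real_normK ?num_real.
rewrite ea eb.
have h : 0 <= `|a| * `|b| by rewrite mulr_ge0.
have -> : (`|a| + `|b|) ^+ 2 = `|a| ^+ 2 + `|b| ^+ 2 + 2 * (`|a| * `|b|) by ring.
by rewrite lerDl mulr_ge0.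
Qed.


Lemma vnorm_ge0 (v : 'cV[R]_2) : 0 <= vnorm v.
Proof. exact: sqrtr_ge0. Qed.

Lemma vnorm_scale (c : R) (v : 'cV[R]_2) : vnorm (c *: v) = `|c| * vnorm v.
Proof.
rewrite !vnormE !mxE.
have -> : (c * v 0 0) ^+ 2 + (c * v 1 0) ^+ 2 = c ^+ 2 * (v 0 0 ^+ 2 + v 1 0 ^+ 2) by ring.
by rewrite sqrtrM ?sqr_ge0 // sqrtr_sqr.
Qed.

Definition Kb (M : 'M[R]_2) := `|M 0 0| + `|M 0 1| + (`|M 1 0| + `|M 1 1|).

Lemma unit_coord (y : 'cV[R]_2) : vnorm y = 1 -> `|y 0 0| <= 1 /\ `|y 1 0| <= 1.
Proof.
rewrite vnormE => h.
have s : y 0 0 ^+ 2 + y 1 0 ^+ 2 = 1.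
  by rewrite -(@sqr_sqrtr _ (y 0 0 ^+ 2 + y 1 0 ^+ 2)) ?addr_ge0 ?sqr_ge0 // h expr1n.
have h0 : `|y 0 0| ^+ 2 <= 1 ^+ 2.
  by rewrite expr1n real_normK ?num_real // -s lerDl sqr_ge0.
have h1 : `|y 1 0| ^+ 2 <= 1 ^+ 2.
  by rewrite expr1n real_normK ?num_real // -s lerDr sqr_ge0.
by split; [move: h0 | move: h1]; rewrite ler_sqr ?nnegrE.
Qed.

Lemma opnorm_set_ub (M : 'M[R]_2) (y : 'cV[R]_2) : vnorm y = 1 -> vnorm (M *m y) <= Kb M.
Proof.
move=> hy; have [a0 a1] := unit_coord y hy.
rewrite vnormE !mulmx2E; apply: le_trans (sqrt2_le_abs _ _) _.
rewrite /Kb; apply: lerD; apply: le_trans (ler_normD _ _) _; rewrite !normrM;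
  by apply: lerD; apply: ler_piMr.
Qed.

Lemma opnorm_has_sup (M : 'M[R]_2) :
  has_sup [set vnorm (M *m x) | x in [set x : 'cV[R]_2 | vnorm x = 1]].
Proof.
split.
  exists (vnorm (M *m cv2 1 0)), (cv2 1 0) => //.
  by rewrite /= vnormE cv2E0 cv2E1 expr1n expr0n /= addr0 sqrtr1.
by exists (Kb M) => _ [y /= hy <-]; exact: opnorm_set_ub.
Qed.

Lemma opnorm_ge0 (M : 'M[R]_2) : 0 <= opnorm M.
Proof.
have hs := opnorm_has_sup M.
have [e [y hy ey]] := hs.1.
apply: le_trans (vnorm_ge0 (M *m y)) _; rewrite ey.
by apply: (sup_upper_bound hs); exists y.
Qed.

Lemma opnorm_bound (M : 'M[R]_2) (x : 'cV[R]_2) : 0 < vnorm x ->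
  vnorm (M *m x) <= opnorm M * vnorm x.
Proof.
move=> hx; set y := (vnorm x)^-1 *: x.
have hy : vnorm y = 1 by rewrite vnorm_scale gtr0_norm ?invr_gt0 // mulVf ?gt_eqF.
have : vnorm (M *m y) <= opnorm M.
  by apply: (sup_upper_bound (opnorm_has_sup M)); exists y.
rewrite /y -scalemxAr vnorm_scale gtr0_norm ?invr_gt0 //.
by rewrite mulrC ler_pdivrMr.
Qed.


Lemma qbound (g w v : R) : 0 <= v ->
  (w - g * Num.sqrt v) ^+ 2 <=
  g ^+ 2 * v + w ^+ 2 * (if g * w < 0 then 1 else 0) * v
  + (`|g| + Num.sqrt (g ^+ 2 + w ^+ 2)) ^+ 2.
Proof.
move=> v0; set s := Num.sqrt v; set t := Num.sqrt (g ^+ 2 + w ^+ 2).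
have s0 : 0 <= s by exact: sqrtr_ge0.
have t0 : 0 <= t by exact: sqrtr_ge0.
have vE : v = s ^+ 2 by rewrite sqr_sqrtr.
have tE : t ^+ 2 = g ^+ 2 + w ^+ 2 by rewrite sqr_sqrtr // addr_ge0 // sqr_ge0.
have gt : 0 <= `|g| * t by rewrite mulr_ge0.
have fE : (`|g| + t) ^+ 2 = `|g| ^+ 2 + 2 * (`|g| * t) + t ^+ 2 by ring.
have g2 : 0 <= `|g| ^+ 2 by exact: sqr_ge0.
have lE : (w - g * s) ^+ 2 = w ^+ 2 - 2 * (g * w * s) + g ^+ 2 * s ^+ 2 by ring.
rewrite fE tE lE vE.
case: ifP => hgw.
  have h : 0 <= (w * s + g) ^+ 2 by exact: sqr_ge0.
  have hE : (w * s + g) ^+ 2 = w ^+ 2 * s ^+ 2 + 2 * (g * w * s) + g ^+ 2 by ring.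
  rewrite hE in h; rewrite mulr1; nra.
have h : 0 <= g * w * s.
  by rewrite mulr_ge0 // leNgt hgw.
rewrite mulr0 mul0r addr0; nra.
Qed.


Lemma addcE (A B : 'cV[R]_2) i : (A + B) i 0 = A i 0 + B i 0.
Proof. by rewrite mxE. Qed.

Lemma stepE (omega : 'cV[R]_2) (alpha beta : 'M[R]_2) (g1 g2 : R) x w i :
  garch_step omega alpha beta g1 g2 x w i 0 =
  omega i 0 + (beta i 0 * x 0 0 + beta i 1 * x 1 0)
  + (alpha i 0 * (w.1 - g1 * Num.sqrt (x 0 0)) ^+ 2
     + alpha i 1 * (w.2 - g2 * Num.sqrt (x 1 0)) ^+ 2).
Proof.
by rewrite /garch_step !addcE !mulmx2E cv2E0 cv2E1.
Qed.


Lemma TE (alpha beta : 'M[R]_2) (g1 g2 : R) w (x : 'cV[R]_2) i :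
  ((Bmat alpha beta g1 g2 + bmat alpha g1 g2 w) *m x) i 0 =
  (beta i 0 + alpha i 0 * g1 ^+ 2 + alpha i 0 * w.1 ^+ 2 * (if g1 * w.1 < 0 then 1 else 0)) * x 0 0
  + (beta i 1 + alpha i 1 * g2 ^+ 2 + alpha i 1 * w.2 ^+ 2 * (if g2 * w.2 < 0 then 1 else 0)) * x 1 0.
Proof. by rewrite mulmx2E !mxE /=. Qed.

Lemma FE (alpha : 'M[R]_2) (g1 g2 : R) w i :
  (alpha *m fvec g1 g2 w) i 0 =
  alpha i 0 * (`|g1| + Num.sqrt (g1 ^+ 2 + w.1 ^+ 2)) ^+ 2
  + alpha i 1 * (`|g2| + Num.sqrt (g2 ^+ 2 + w.2 ^+ 2)) ^+ 2.
Proof. by rewrite mulmx2E /fvec cv2E0 cv2E1. Qed.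


Lemma pointwise (omega : 'cV[R]_2) (alpha beta : 'M[R]_2) (g1 g2 : R) x w :
  assumption1 omega alpha beta -> in_D omega x ->
  vnorm (garch_step omega alpha beta g1 g2 x w) <=
  opnorm (Bmat alpha beta g1 g2 + bmat alpha g1 g2 w) * vnorm x
  + (vnorm omega + vnorm (alpha *m fvec g1 g2 w)).
Proof.
move=> [hom hbe hal _ _] hD.
have x0 : 0 <= x 0 0 by apply: le_trans (hD 0); apply: ltW.
have x1 : 0 <= x 1 0 by apply: le_trans (hD 1); apply: ltW.
set M := Bmat alpha beta g1 g2 + bmat alpha g1 g2 w.
set S := garch_step omega alpha beta g1 g2 x w.
set T := M *m x.
set F := alpha *m fvec g1 g2 w.
have ind0 (c : R) : 0 <= (if c < 0 then 1 else 0 : R) by case: ifP.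
have Tge0 i : 0 <= T i 0.
  by rewrite /T TE; repeat (apply: addr_ge0 || apply: sqr_ge0 || apply: mulr_ge0 || apply: ind0 || apply: hbe || apply: hal || done).
have Fge0 i : 0 <= F i 0.
  by rewrite /F FE; repeat (apply: addr_ge0 || apply: sqr_ge0 || apply: mulr_ge0 || apply: hal || done).
have Sge0 i : 0 <= S i 0.
  rewrite /S stepE; repeat (apply: addr_ge0 || apply: sqr_ge0 || apply: mulr_ge0 || apply: hal || apply: hbe || done).
  exact: ltW.
have Sle i : S i 0 <= omega i 0 + (T i 0 + F i 0).
  have -> : omega i 0 + (T i 0 + F i 0) =
    omega i 0 + (beta i 0 * x 0 0 + beta i 1 * x 1 0)
    + (alpha i 0 * (g1 ^+ 2 * x 0 0 + w.1 ^+ 2 * (if g1 * w.1 < 0 then 1 else 0) * x 0 0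
                    + (`|g1| + Num.sqrt (g1 ^+ 2 + w.1 ^+ 2)) ^+ 2)
     + alpha i 1 * (g2 ^+ 2 * x 1 0 + w.2 ^+ 2 * (if g2 * w.2 < 0 then 1 else 0) * x 1 0
                    + (`|g2| + Num.sqrt (g2 ^+ 2 + w.2 ^+ 2)) ^+ 2)).
    by rewrite /T /F TE FE; ring.
  rewrite /S stepE; apply: lerD => //.
  by apply: lerD; apply: ler_wpM2l => //; apply: qbound.
have hT : vnorm T <= opnorm M * vnorm x.
  apply: opnorm_bound; rewrite vnormE sqrtr_gt0.
  by apply: ltr_pwDl (sqr_ge0 _); rewrite exprn_gt0 // (lt_le_trans (hom 0) (hD 0)).
apply: le_trans (_ : vnorm omega + (vnorm T + vnorm F) <= _); last first.
  by rewrite addrCA; apply: lerD.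
rewrite /S vnormE.
have H0 : 0 <= S 0 0 <= omega 0 0 + (T 0 0 + F 0 0) by rewrite Sge0 Sle.
have H1 : 0 <= S 1 0 <= omega 1 0 + (T 1 0 + F 1 0) by rewrite Sge0 Sle.
apply: le_trans (sqrt2_mono _ _ _ _ H0 H1) _.
apply: le_trans (sqrt2_tri _ _ _ _) _; rewrite -vnormE lerD2l.
by rewrite (vnormE T) (vnormE F); exact: sqrt2_tri.
Qed.

End Aux.

Lemma vnorm_pos (R : realType) (omega : 'cV[R]_2) (alpha beta : 'M[R]_2) x :
  assumption1 omega alpha beta -> in_D omega x -> 0 < vnorm x.
Proof.
move=> [hom _ _ _ _] hD; rewrite vnormE sqrtr_gt0.
by apply: ltr_pwDl (sqr_ge0 _); rewrite exprn_gt0 // (lt_le_trans (hom 0) (hD 0)).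
Qed.

Ltac mfun := repeat first [
  exact: measurable_cst
| exact: measurable_fst
| exact: measurable_snd
| apply: (measurableT_comp (measurable_realfun.continuous_measurable_fun (@sqrt_continuous _)))
| apply: measurable_realfun.measurable_funX
| apply: measurable_realfun.measurable_maxr
| apply: measurable_realfun.measurable_funD
| apply: measurable_realfun.measurable_funB
| apply: measurable_realfun.measurable_funM ].

Section Meas.
Variable R : realType.
Let G := (measurable_structure_g_sigma_algebraType__canonical__measurable_structure_Measurable
     (T:=lebesgue_stieltjes_measure_ocitv_type__canonical__classical_sets_Pointed R) (R.-ocitv).-measurable).

Lemma mSt (omega : 'cV[R]_2) (alpha beta : 'M[R]_2) (g1 g2 : R) x :
  measurable_fun setT (fun w : G * G => vnorm (garch_step omega alpha beta g1 g2 x w)).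
Proof.
under eq_fun do rewrite vnormE !stepE.
mfun.
Qed.

Lemma mH (alpha : 'M[R]_2) (g1 g2 : R) :
  measurable_fun setT (fun w : G * G => vnorm (alpha *m fvec g1 g2 w)).
Proof.
under eq_fun do rewrite vnormE !FE.
mfun.
Qed.

End Meas.

Lemma le_integral_nm d (T : measurableType d) (R : realType)
  (mu : {measure set T -> \bar R}) (f g : T -> \bar R) :
  (forall x, (0 <= f x)%E) -> (forall x, (f x <= g x)%E) ->
  (\int[mu]_x f x <= \int[mu]_x g x)%E.
Proof.
move=> f0 fg.
have g0 x : (0 <= g x)%E by exact: le_trans (f0 x) (fg x).
rewrite !ge0_integralTE //=.
apply: ge_ereal_sup => _ [h hf <-]; apply: ereal_sup_ubound; exists h => //= x.
exact: le_trans (hf x) (fg x).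
Qed.

Theorem mainTheorem5 (R : realType) (omega : 'cV[R]_2) (alpha beta : 'M[R]_2)
  (g1 g2 : R) :
  assumption1 omega alpha beta ->
  (c_const omega alpha g1 g2 < +oo)%E ->
  forall x : 'cV[R]_2, in_D omega x ->
  (cond_exp_norm omega alpha beta g1 g2 x
     <= phi_const alpha beta g1 g2 * (vnorm x)%:E + c_const omega alpha g1 g2)%E.
Proof.
move=> hA hc x hD.
have hx := @vnorm_pos _ _ _ _ x hA hD.
set nx := vnorm x.
set St := fun w : R * R => vnorm (garch_step omega alpha beta g1 g2 x w).
set H := fun w : R * R => vnorm omega + vnorm (alpha *m fvec g1 g2 w).
set k := fun w : R * R => Num.max (St w - H w) 0 / nx.
have mSt' := mSt _ omega alpha beta g1 g2 x.
have mH' := mH _ alpha g1 g2.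
have mHH : measurable_fun setT (H : _ -> R).
  by apply: measurable_realfun.measurable_funD => //; exact: measurable_cst.
have mk : measurable_fun setT (k : _ -> R).
  apply: measurable_realfun.measurable_funM; last exact: measurable_cst.
  apply: measurable_realfun.measurable_maxr; last exact: measurable_cst.
  exact: measurable_realfun.measurable_funB.
have k0 w : 0 <= k w.
  by rewrite /k /=; apply: divr_ge0; [rewrite le_max lexx orbT | exact: ltW].
have kle w : k w <= opnorm (Bmat alpha beta g1 g2 + bmat alpha g1 g2 w).
  rewrite /k /= ler_pdivrMr // ge_max; apply/andP; split.
    by rewrite lerBlDr; exact: pointwise.
  by rewrite mulr_ge0 ?opnorm_ge0 // ltW.
have Stle w : St w <= nx * k w + H w.
  by rewrite /k /= mulrC divfK ?gt_eqF // -lerBlDr le_max lexx.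
have H0 w : 0 <= H w by rewrite /H addr_ge0 // vnorm_ge0.
rewrite /cond_exp_norm.
apply: (@le_trans _ _ (\int[stdnormal2]_w ((nx * k w + H w)%:E))%E).
  apply: ge0_le_integral => //.
  - by move=> w _; rewrite lee_fin vnorm_ge0.
  - exact/measurable_realfun.measurable_EFinP.
  - apply/measurable_realfun.measurable_EFinP; apply: measurable_realfun.measurable_funD => //.
    by apply: measurable_realfun.measurable_funM => //; exact: measurable_cst.
  - by move=> w _; rewrite lee_fin; exact: Stle.
under eq_integral => w _ do rewrite EFinD EFinM.
rewrite ge0_integralD //; last 4 first.
- by move=> w _; rewrite mule_ge0 // lee_fin // ltW.
- by apply: emeasurable_funM; [exact: measurable_cst | exact/measurable_realfun.measurable_EFinP].
- by move=> w _; rewrite lee_fin.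
- exact/measurable_realfun.measurable_EFinP.
rewrite ge0_integralZl_EFin //; last 3 first.
- by move=> w _; rewrite lee_fin.
- exact/measurable_realfun.measurable_EFinP.
- exact: ltW.
have HE w : (H w)%:E = ((vnorm omega)%:E + (vnorm (alpha *m fvec g1 g2 w))%:E)%E.
  by rewrite /H EFinD.
have -> : (\int[stdnormal2]_w (H w)%:E =
  \int[stdnormal2]_w ((vnorm omega)%:E + (vnorm (alpha *m fvec g1 g2 w))%:E))%E.
  by apply: eq_integral => w _; exact: HE.
rewrite ge0_integralD //; try (by move=> w _; rewrite lee_fin vnorm_ge0);
  try exact: measurable_cst; try exact/measurable_realfun.measurable_EFinP.
rewrite integral_cst //.
rewrite [X in ((vnorm omega)%:E * X)%E](_ : _ = 1%E); last first.
  have h := product_measure1E (normal_prob (0:R) 1) (normal_prob (0:R) 1)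
     (@measurableT _ _) (@measurableT _ _).
  rewrite setXTT in h; apply: (etrans h).
  have p1 : normal_prob (0:R) 1 setT = 1%E := probability_setT _.
  have e (a b : \bar R) : a = 1%E -> b = 1%E -> (a * b = 1)%E by move=> -> ->; rewrite mule1.
  by apply: e; exact: p1.
rewrite mule1 /c_const leeD2r // muleC.
apply: lee_wpmul2r; first by rewrite lee_fin ltW.
apply: le_integral_nm => w; first by rewrite lee_fin.
by rewrite lee_fin.
Qed.
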